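(* Let $\mu$ be a finite Borel measure on $\mathbb{R}$ with all moments $y_k=\int x^kd\mu$ finite, $\mathbf{y}=(y_k)$, and assume $\mathbf{H}_d(\mathbf{y})\succ0$ for all $d\in\mathbb{N}$. Fix $d\in\mathbb{N}$ and let $$a_d=\max_{a\in\mathbb{R}}\{a:\mathbf{H}_d(\theta_a\mathbf{y})\succeq0\},\qquad b_d=\min_{b\in\mathbb{R}}\{b:\mathbf{H}_d(-\theta_b\mathbf{y})\succeq0\},$$ $$a_d^*=\inf\Big\{\int x\,\sigma(x)\,d\mu(x):\ \sigma\in\Sigma[x]_d,\ \int\sigma\,d\mu=1\Big\},\qquad b_d^*=\sup\Big\{\int x\,\sigma(x)\,d\mu(x):\ \sigma\in\Sigma[x]_d,\ \int\sigma\,d\mu=1\Big\}.$$ Then $a_d=a_d^*$ and $b_d=b_d^*$; the infimum defining $a_d^*$ is attained at some $\sigma^*\in\Sigma[x]_d$ and the supremum defining $b_d^*$ is attained at some $\psi^*\in\Sigma[x]_d$; and $$\int(x-a_d)\,\sigma^*(x)\,d\mu(x)=0=\int(b_d-x)\,\psi^*(x)\,d\mu(x).$$ Moreover, if $\sigma^*=\sum_\ell p_\ell^2$ with polynomials $p_\ell$ of degree at most $d$ and coefficient vectors $\mathbf{p}_\ell\in\mathbb{R}^{d+1}$ (in the basis $1,x,\ldots,x^d$), then each $\mathbf{p}_\ell$ lies in the kernel of $\mathbf{H}_d(\theta_{a_d}\mathbf{y})$.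
   Context: $\Sigma[x]_d$ denotes the set of real univariate polynomials of degree at most $2d$ that are sums of squares of polynomials. For a sequence $\mathbf{y}=(y_k)_{k\in\mathbb{N}}$ and a polynomial $\theta(x)=\sum_{k=0}^s\theta_kx^k$, $\mathbf{H}_d(\theta\,\mathbf{y})$ is the $(d+1)\times(d+1)$ symmetric matrix with entries $\sum_{k=0}^s\theta_k\,y_{i+j+k-2}$, $i,j=1,\ldots,d+1$; $\mathbf{H}_d(\mathbf{y})$ is the Hankel matrix with entries $y_{i+j-2}$. For $a\in\mathbb{R}$, $\theta_a(x)=x-a$, so $\mathbf{H}_d(\theta_a\mathbf{y})(i,j)=y_{i+j-1}-a\,y_{i+j-2}$ and $\mathbf{H}_d(-\theta_b\mathbf{y})(i,j)=b\,y_{i+j-2}-y_{i+j-1}$. $\succeq0$ (resp. $\succ0$) denotes positive semidefiniteness (resp. definiteness). *)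

(* Defs.v *)
(* Real numbers are modelled by an arbitrary real closed field. *)
From HB Require Import structures.
From mathcomp Require Import all_boot all_order all_algebra.
Set Implicit Arguments. Unset Strict Implicit. Unset Printing Implicit Defensive.
Import Order.TTheory GRing.Theory Num.Theory.
Local Open Scope ring_scope.

(* Riesz functional of the moment sequence y: for p = sum_k p_k x^k,
   Ly y p = sum_k p_k y_k  (= \int p d\mu when y_k = \int x^k d\mu). *)
Definition Ly (R : ringType) (y : nat -> R) (p : {poly R}) : R :=
  \sum_(k < size p) p`_k * y k.

Definition Hmx (R : ringType) (d : nat) (y : nat -> R) : 'M[R]_d.+1 :=
  \matrix_(i < d.+1, j < d.+1) y (i + j)%N.

Definition Hloc (R : ringType) (d : nat) (theta : {poly R}) (y : nat -> R)
  : 'M[R]_d.+1 :=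
  \matrix_(i < d.+1, j < d.+1) \sum_(k < size theta) theta`_k * y (i + j + k)%N.

Definition theta (R : ringType) (a : R) : {poly R} := 'X - a%:P.

(* positive semidefinite / definite (for the symmetric matrices at hand) *)
Definition psd (R : numDomainType) (n : nat) (A : 'M[R]_n) : Prop :=
  forall v : 'cV[R]_n, 0 <= (v^T *m A *m v) ord0 ord0.
Definition pd (R : numDomainType) (n : nat) (A : 'M[R]_n) : Prop :=
  forall v : 'cV[R]_n, v != 0 -> 0 < (v^T *m A *m v) ord0 ord0.

Definition sos_d (R : ringType) (d : nat) (p : {poly R}) : Prop :=
  (size p <= (2 * d).+1)%N /\
  exists s : seq {poly R}, p = \sum_(q <- s) q ^+ 2.

Definition coefv (R : ringType) (d : nat) (p : {poly R}) : 'cV[R]_d.+1 :=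
  \col_(i < d.+1) p`_i.

(* Main.v *)
Require Import Defs.
From HB Require Import structures.
From mathcomp Require Import all_boot all_order all_algebra.
From Stdlib Require Import Classical.
Set Implicit Arguments. Unset Strict Implicit. Unset Printing Implicit Defensive.
Import Order.TTheory GRing.Theory Num.Theory.
Local Open Scope ring_scope.

Section Schur.
Variable R : rcfType.

Definition schur m (K : 'M[R]_(1 + m)) : 'M[R]_m :=
  drsubmx K - (ulsubmx K 0 0)^-1 *: (dlsubmx K *m ursubmx K).

Lemma schur_det m (K : 'M[R]_(1 + m)) : ulsubmx K 0 0 != 0 ->
  \det K = ulsubmx K 0 0 * \det (schur K).
Proof.
move=> s0; set s := ulsubmx K 0 0.
have Kd : K = block_mx 1%:M 0 (s^-1 *: dlsubmx K) 1%:M *m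
              block_mx (ulsubmx K) (ursubmx K) 0 (schur K).
  rewrite mulmx_block !mul1mx !mul0mx !addr0.
  rewrite [ulsubmx K in X in block_mx _ _ X _]mx11_scalar -/s mul_mx_scalar scalerA mulfV //.
  rewrite scale1r /schur -scalemxAl addrC subrK.
  by rewrite submxK.
by rewrite {1}Kd det_mulmx det_lblock det_ublock !det1 !mul1r det_mx11.
Qed.
End Schur.
Section QF2.
Variable R : rcfType.
Definition qf n (N : 'M[R]_n) (v : 'cV[R]_n) : R := (v^T *m N *m v) ord0 ord0.

Lemma sym_blocks m (K : 'M[R]_(1 + m)) : K^T = K ->
  (dlsubmx K = (ursubmx K)^T) /\ (drsubmx K)^T = drsubmx K.
Proof.
move=> sK; split.
  by rewrite -[in RHS]sK -[K in RHS]submxK tr_block_mx block_mxKur trmxK.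
by rewrite -[in RHS]sK -[K in RHS]submxK tr_block_mx block_mxKdr.
Qed.

Lemma qf_block m (K : 'M[R]_(1 + m)) (t : 'cV[R]_1) (w : 'cV[R]_m) :
  K^T = K -> ulsubmx K 0 0 != 0 ->
  qf K (col_mx t w) = ulsubmx K 0 0 * (t 0 0 + (ulsubmx K 0 0)^-1 * (ursubmx K *m w) 0 0) ^+ 2
      + qf (schur K) w.
Proof.
move=> sK s0; have [edl edr] := sym_blocks sK.
set s := ulsubmx K 0 0; set u := (ursubmx K *m w) 0 0; set a := t 0 0.
rewrite /qf tr_col_mx -[K in LHS]submxK mul_row_block mul_row_col.
rewrite /schur edl -/s.
rewrite [t]mx11_scalar -/a [ulsubmx K]mx11_scalar -/s tr_scalar_mx.
rewrite !mulmxDl !mul_scalar_mx !mul_mx_scalar mulmxBr mulmxBl.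
have e3 : forall c : R, w^T *m (c *: ((ursubmx K)^T *m ursubmx K)) *m w =
   c *: ((ursubmx K *m w)^T *m (ursubmx K *m w)).
  by move=> c; rewrite -scalemxAr -scalemxAl trmx_mul !mulmxA.
rewrite e3.
have e2 : (ursubmx K *m w) = u%:M by rewrite [LHS]mx11_scalar.
have e1 : w^T *m (ursubmx K)^T = (ursubmx K *m w)^T by rewrite trmx_mul.
rewrite -!scalemxAl e1 e2 tr_scalar_mx !mul_scalar_mx.
rewrite !mxE /= !mulr1n.
set Q := \sum_(j < m) _.
have h1 : s * (a + s^-1 * u) ^+ 2 = a * (a * s) + (a * u + a * u) + s^-1 * (u * u).
  rewrite sqrrD !mulrDr; congr (_ + _ + _).
  - by rewrite expr2 mulrC mulrA.
  - by congr (_ + _); rewrite mulrCA; congr (_ * _); rewrite mulrA mulfV // mul1r.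
  - by rewrite expr2 mulrA [s * _]mulrA (@mulfV R s) // mul1r mulrCA.
rewrite h1; set z := s^-1 * (u * u).
by rewrite !addrA (addrAC _ z Q) addrK.

Qed.
End QF2.

Section QFA.
Variable R : rcfType.

Definition bil n (N : 'M[R]_n) (u v : 'cV[R]_n) : R := (u^T *m N *m v) ord0 ord0.

Lemma qfD n (N1 N2 : 'M[R]_n) v : qf (N1 + N2) v = qf N1 v + qf N2 v.
Proof. by rewrite /qf mulmxDr mulmxDl mxE. Qed.

Lemma qfZ n (N : 'M[R]_n) c v : qf (c *: N) v = c * qf N v.
Proof. by rewrite /qf -scalemxAr -scalemxAl mxE. Qed.

Lemma qfN n (N : 'M[R]_n) v : qf (- N) v = - qf N v.
Proof. by rewrite -scaleN1r qfZ mulN1r. Qed.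

Lemma qfB n (N1 N2 : 'M[R]_n) v : qf (N1 - N2) v = qf N1 v - qf N2 v.
Proof. by rewrite qfD qfN. Qed.

Lemma qf_scalev n (N : 'M[R]_n) c v : qf N (c *: v) = c ^+ 2 * qf N v.
Proof.
rewrite /qf; have -> : (c *: v)^T = c *: v^T by apply/matrixP => i j; rewrite !mxE.
by rewrite -!scalemxAl -scalemxAr !mxE mulrA expr2.
Qed.

Lemma bil_sym n (N : 'M[R]_n) u v : N^T = N -> bil N u v = bil N v u.
Proof.
move=> sN; rewrite /bil.
have e : forall B : 'M[R]_1, B ord0 ord0 = B^T ord0 ord0 by move=> B; rewrite mxE.
by rewrite [in RHS]e !trmx_mul trmxK sN mulmxA.
Qed.

Lemma qf_add n (N : 'M[R]_n) u v : N^T = N ->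
  qf N (u + v) = qf N u + 2%:R * bil N u v + qf N v.
Proof.
move=> sN; rewrite /qf.
have -> : (u + v)^T = u^T + v^T by apply/matrixP => i j; rewrite !mxE.
rewrite !mulmxDl !mulmxDr ![((_ + _)%R : 'M_1) ord0 ord0]mxE.
have := bil_sym u v sN; rewrite /bil => ->.
by rewrite mulr_natl mulr2n !addrA.
Qed.

Lemma bilZ n (N : 'M[R]_n) u c v : bil N u (c *: v) = c * bil N u v.
Proof. by rewrite /bil -scalemxAr mxE. Qed.

Lemma psd_kernel n (N : 'M[R]_n) v : N^T = N -> psd N -> qf N v = 0 -> N *m v = 0.
Proof.
move=> sN pN q0; set w := N *m v.
have bw : bil N w v = \sum_i (w i 0) ^+ 2.
  rewrite /bil -mulmxA -/w mxE; apply: eq_bigr => i _; by rewrite mxE expr2.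
set al := \sum_i (w i 0) ^+ 2.
have al0 : 0 <= al by apply: sumr_ge0 => i _; exact: sqr_ge0.
set be := qf N w.
have be0 : 0 <= be by apply: pN.
pose t := - al / (be + 1).
have H : 0 <= qf N (v + t *: w) := pN _.
rewrite qf_add // q0 add0r bilZ bil_sym // bw -/al qf_scalev -/be in H.
have b1 : 0 < be + 1 by rewrite ltr_wpDl.
have al0' : al = 0.
  apply/eqP; rewrite eq_le al0 andbT; apply: contraTT H => Hal.
  rewrite -ltNge in Hal *.
  have tneg : t < 0 by rewrite /t mulNr oppr_lt0 divr_gt0.
  have e1 : t * be >= - al.
    rewrite /t mulNr mulNr lerN2 mulrAC ler_pdivrMr // ler_pM2l //.
    by rewrite lerDl ler01.
  have e2 : 0 < 2%:R * al + t * be.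
    apply: (lt_le_trans _ (lerD (lexx (2%:R * al)) e1)).
    by rewrite mulr_natl mulr2n -addrA subrr addr0.
  have -> : 2%:R * (t * al) + t ^+ 2 * be = t * (2%:R * al + t * be).
    by rewrite mulrDr expr2 mulrCA !mulrA.
  by rewrite -ltNge pmulr_llt0.
apply/matrixP => i j; rewrite !mxE; rewrite (ord1 j).
move: al0'; rewrite /al => /eqP; rewrite psumr_eq0 => [/allP H1|i' _]; last exact: sqr_ge0.
have := H1 i; rewrite mem_index_enum => /(_ isT) /eqP /eqP; rewrite sqrf_eq0 => /eqP.
move=> h; rewrite -[RHS]h /w mxE; reflexivity.
Qed.
End QFA.

Section Sylv.
Variable R : rcfType.
Definition pdm n (N : 'M[R]_n) := forall v : 'cV[R]_n, v != 0 -> 0 < qf N v.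

Definition lead n (N : 'M[R]_n.+1) (k : nat) : 'M[R]_k.+1 :=
  \matrix_(i < k.+1, j < k.+1) N (inord i) (inord j).

Lemma lead_full n (N : 'M[R]_n.+1) : lead N n = N.
Proof. by apply/matrixP => i j; rewrite mxE !inord_val. Qed.

Lemma schur_sym m (K : 'M[R]_(1 + m)) : K^T = K -> (schur K)^T = schur K.
Proof.
move=> sK; have [edl edr] := sym_blocks sK.
by rewrite /schur linearB /= edr linearZ /= trmx_mul edl trmxK.
Qed.

Lemma qf_e0 m (K : 'M[R]_(1 + m)) : qf K (col_mx 1%:M 0) = ulsubmx K 0 0.
Proof.
rewrite /qf tr_col_mx -[K in LHS]submxK mul_row_block mul_row_col trmx1 trmx0.
by rewrite !mul0mx !mul1mx !mulmx0 !addr0 mulmx1.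
Qed.

Lemma lead0 n (N : 'M[R]_n.+1) : \det (lead N 0%N) = N ord0 ord0.
Proof. by rewrite det_mx11 mxE; congr (N _ _); apply: val_inj; rewrite /= inordK. Qed.

Lemma leadS n (K : 'M[R]_(1 + n.+1)) k : (k <= n)%N -> ulsubmx K 0 0 != 0 ->
  \det (lead K k.+1) = ulsubmx K 0 0 * \det (lead (schur K) k).
Proof.
move=> kn s0.
have e : ulsubmx (lead K k.+1 : 'M_(1 + k.+1)) 0 0 = ulsubmx K 0 0.
  by rewrite !mxE; congr (K _ _); apply: val_inj; rewrite /= inordK.
rewrite (schur_det (K := lead K k.+1 : 'M_(1 + k.+1))) e //.
congr (_ * \det _); apply/matrixP => i j.
rewrite /schur !mxE !big_ord1 !mxE.
have hi : (i < n.+1)%N by apply: leq_trans (ltn_ord i) _.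
have hj : (j < n.+1)%N by apply: leq_trans (ltn_ord j) _.
congr (K _ _ - (K _ _)^-1 * (K _ _ * K _ _)); apply: val_inj => /=;
  rewrite ?inordK //= ?ltnS //.
Qed.

Lemma sylv1 n (N : 'M[R]_n.+1) : N^T = N -> pdm N ->
  forall k, (k <= n)%N -> 0 < \det (lead N k).
Proof.
elim: n N => [|n IH] N sN pN k kn.
  move: kn; rewrite leqn0 => /eqP ->; rewrite lead0.
  have := pN 1%:M; rewrite /qf trmx1 mul1mx mulmx1.
  apply; apply/eqP => /matrixP /(_ ord0 ord0); rewrite !mxE /=; apply/eqP; exact: oner_neq0.
pose K : 'M[R]_(1 + n.+1) := N.
have sK : K^T = K by [].
have pK : pdm K by [].
have s0 : 0 < ulsubmx K 0 0.
  rewrite -qf_e0; apply: pK; rewrite col_mx_eq0 negb_and; apply/orP; left.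
  apply/eqP => /matrixP /(_ ord0 ord0); rewrite !mxE /=; apply/eqP; exact: oner_neq0.
have ps : pdm (schur K).
  move=> w w0; set u := (ursubmx K *m w) 0 0.
  set c := - ((ulsubmx K 0 0)^-1 * u).
  have ec : (c%:M : 'cV[R]_1) 0 0 = c by rewrite mxE.
  have := pK (col_mx c%:M w).
  rewrite (qf_block _ _ sK) ?gt_eqF // ec /c -/u addNr expr0n /= mulr0 add0r.
  by apply; rewrite col_mx_eq0 negb_and w0 orbT.
case: k kn => [|k] kn.
  have -> : \det (lead N 0%N) = ulsubmx K 0 0.
    by rewrite lead0 !mxE /=; congr (N _ _); apply: val_inj.
  done.
rewrite (leadS (K := K)) ?gt_eqF //.
by rewrite mulr_gt0 // IH // schur_sym.
Qed.


Lemma qf_zero n (N : 'M[R]_n) : qf N 0 = 0.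
Proof. by rewrite /qf mulmx0 mxE. Qed.

Lemma sylv2 n (N : 'M[R]_n.+1) : N^T = N ->
  (forall k, (k <= n)%N -> 0 < \det (lead N k)) -> pdm N.
Proof.
elim: n N => [|n IH] N sN hN.
  have := hN 0%N (leqnn 0); rewrite lead0 => h v v0.
  have e : qf N v = N ord0 ord0 * (v ord0 ord0) ^+ 2.
    by rewrite /qf !(mxE, big_ord1) expr2 [_ * N _ _]mulrC mulrA.
  rewrite e pmulr_rgt0 // lt_def sqr_ge0 andbT sqrf_eq0.
  apply: contra v0 => /eqP h0; apply/eqP/matrixP => i j.
  by rewrite (ord1 i) (ord1 j) h0 mxE.
pose K : 'M[R]_(1 + n.+1) := N.
have sK : K^T = K by [].
have s0 : 0 < ulsubmx K 0 0.
  have := hN 0%N isT; rewrite lead0 => h.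
  have e : lshift n.+1 (0 : 'I_1) = (ord0 : 'I_n.+2) by apply: val_inj.
  by rewrite !mxE /= e.
have ps : pdm (schur K).
  apply: IH; first exact: schur_sym.
  move=> k kn; have := hN k.+1 kn; rewrite (leadS (K := K)) ?gt_eqF //.
  by rewrite pmulr_rgt0.
suff : pdm K by [].
move=> v v0; rewrite -(vsubmxK v) (qf_block _ _ sK) ?gt_eqF //.
have [w0|w0] := eqVneq (dsubmx v) 0.
  have ez : ((ursubmx K *m 0) : 'M[R]_1) 0 0 = 0 by rewrite mulmx0 mxE.
  rewrite w0 ez mulr0 addr0 qf_zero addr0 pmulr_rgt0 //.
  rewrite lt_def sqr_ge0 andbT sqrf_eq0; apply: contra v0 => /eqP h0.
  rewrite -(vsubmxK v) w0; apply/eqP; rewrite -[X in _ = X]col_mx0; congr col_mx.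
  apply/matrixP => i j; by rewrite (ord1 i) (ord1 j) h0 mxE.
apply: ltr_wpDl; last exact: ps.
by apply: mulr_ge0; [exact: ltW | exact: sqr_ge0].
Qed.
End Sylv.

Section Roots.
Variable R : rcfType.

Lemma root_prod_seq (F : nat -> {poly R}) s x :
  root (\prod_(k <- s) F k) x = has (fun k => root (F k) x) s.
Proof.
elim: s => [|k s IH]; first by rewrite big_nil; apply/negbTE/root1.
by rewrite big_cons rootM IH.
Qed.

Lemma pos_prop (p : {poly R}) lo hi : 0 < p.[lo] -> lo <= hi ->
  (forall x, lo <= x <= hi -> ~~ root p x) -> 0 < p.[hi].
Proof.
move=> plo lh nr; rewrite ltNge; apply/negP => phi.
have [x hx rx] : exists2 x, lo <= x <= hi & root (- p) x.
  apply: poly_ivt => //; rewrite !hornerN oppr_le0 oppr_ge0 phi andbT.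
  exact: ltW.
by move: (nr x hx); rewrite -rootN rx.
Qed.

Lemma first_root (Q : {poly R}) lo hi : Q != 0 ->
  (exists x, lo < x <= hi /\ root Q x) ->
  exists r, [/\ lo < r, r <= hi, root Q r & forall x, lo < x < r -> ~~ root Q x].
Proof.
move=> Q0 [x0 [hx0 rx0]].
apply: NNPP => Hn.
have step : forall x, lo < x <= hi -> root Q x ->
    exists x', lo < x' < x /\ root Q x'.
  move=> x hx rx; apply: NNPP => Hx; apply: Hn; exists x.
  case/andP: hx => h1 h2; split => // z hz; apply/negP => rz; apply: Hx.
  by exists z; split.
have chain : forall m, exists s : seq R, [/\ size s = m, uniq s, all (root Q) s &
    exists x, [/\ lo < x <= hi, root Q x & forall z, z \in s -> x < z]].
  elim => [|m [s [ss us rs [x [hx rx hz]]]]].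
    by exists [::]; split => //; exists x0; split.
  have [x' [hx' rx']] := step x hx rx.
  case/andP: hx => hx1 hx2; case/andP: hx' => hx1' hx2'.
  exists (x :: s); split => /=.
  - by rewrite ss.
  - rewrite us andbT; apply/negP => /hz; by rewrite ltxx.
  - by rewrite rx rs.
  - exists x'; split => //; first by rewrite hx1' (le_trans (ltW hx2')).
    move=> z; rewrite inE => /orP [/eqP -> // | /hz]; exact: lt_trans.
have [s [ss us rs _]] := chain (size Q).
by have := max_poly_roots Q0 rs us; rewrite ss ltnn.
Qed.
End Roots.

Section Key.
Variable R : rcfType.

Definition Pk n (X Y : 'M[R]_n.+1) k : {poly R} :=
  \det (map_mx polyC (lead X k) + 'X *: map_mx polyC (lead Y k)).

Lemma PkE n (X Y : 'M[R]_n.+1) k t : (Pk X Y k).[t] = \det (lead (X + t *: Y) k).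
Proof.
rewrite /Pk -horner_evalE -det_map_mx; congr (\det _).
apply/matrixP => i j; rewrite !mxE /= horner_evalE hornerD hornerM hornerX !hornerC.
by rewrite mulrC.
Qed.

Definition QP n (X Y : 'M[R]_n.+1) := \prod_(k <- iota 0 n.+1) Pk X Y k.

Lemma rootQP n (X Y : 'M[R]_n.+1) x :
  root (QP X Y) x = has (fun k => root (Pk X Y k) x) (iota 0 n.+1).
Proof. exact: root_prod_seq. Qed.

Lemma QP_nroot n (X Y : 'M[R]_n.+1) x :
  (forall k, (k <= n)%N -> 0 < (Pk X Y k).[x]) -> ~~ root (QP X Y) x.
Proof.
move=> h; rewrite rootQP -all_predC; apply/allP => k; rewrite mem_iota add0n => /andP [_ hk].
by rewrite /= /root gt_eqF // h.
Qed.

Lemma QP_root n (X Y : 'M[R]_n.+1) x k : (k <= n)%N -> root (Pk X Y k) x -> root (QP X Y) x.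
Proof. move=> hk r; rewrite rootQP; apply/hasP; exists k => //; by rewrite mem_iota. Qed.

Lemma pdm_minors n (Z : 'M[R]_n.+1) : Z^T = Z ->
  pdm Z <-> (forall k, (k <= n)%N -> 0 < \det (lead Z k)).
Proof. move=> sZ; split; [exact: sylv1 | exact: sylv2]. Qed.

Lemma symD n (X Y : 'M[R]_n) c : X^T = X -> Y^T = Y -> (X + c *: Y)^T = X + c *: Y.
Proof. by move=> sX sY; rewrite linearD /= linearZ /= sX sY. Qed.

Lemma pdm_scale n (Z : 'M[R]_n) c : 0 < c -> pdm Z -> pdm (c *: Z).
Proof. move=> c0 pZ v v0; rewrite qfZ mulr_gt0 //; exact: pZ. Qed.

Lemma exists_pd n (M A : 'M[R]_n.+1) : M^T = M -> A^T = A -> pdm A ->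
  exists t, 0 < t /\ pdm (A + t *: M).
Proof.
move=> sM sA pA.
have h0 : forall k, (k <= n)%N -> 0 < (Pk A M k).[0].
  by move=> k hk; rewrite PkE scale0r addr0; apply: sylv1.
have nr0 := QP_nroot h0.
have Q0 : QP A M != 0 by apply: contraNneq nr0 => ->; rewrite root0.
have [t [t0 ht]] : exists t, 0 < t /\ forall x, 0 <= x <= t -> ~~ root (QP A M) x.
  case: (classic (exists x, 0 < x <= 1 /\ root (QP A M) x)) => [ex|nex].
    have [r [r0 r1 rr hr]] := first_root Q0 ex.
    exists (r / 2%:R); split; first by rewrite divr_gt0 // ltr0n.
    move=> x /andP [x0 xr]; have [->|xn0] := eqVneq x 0; first exact: nr0.
    apply: hr; rewrite lt_def xn0 x0 /=.
    apply: (le_lt_trans xr); rewrite ltr_pdivrMr ?ltr0n // mulr_natr mulr2n.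
    by rewrite ltrDl.
  exists 1; split; first exact: ltr01.
  move=> x /andP [x0 x1]; have [->|xn0] := eqVneq x 0; first exact: nr0.
  apply/negP => rx; apply: nex; exists x; split => //.
  by rewrite lt_def xn0 x0 x1.
exists t; split => //.
apply/pdm_minors; first exact: symD.
move=> k hk; rewrite -PkE; apply: (pos_prop (lo := 0)) => //; first exact: h0.
  exact: ltW.
move=> x hx; apply: contra (ht x hx); exact: QP_root.
Qed.

Lemma key n (M A : 'M[R]_n.+1) : M^T = M -> A^T = A -> pdm A ->
  exists l (v : 'cV[R]_n.+1),
    [/\ v != 0, (forall u, 0 <= qf (M - l *: A) u) & (M - l *: A) *m v = 0].
Proof.
move=> sM sA pA.
have [t [t0 pt]] := exists_pd sM sA pA.
pose N a := M - a *: A.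
have NE : forall a, N a = M + a *: (- A) by move=> a; rewrite /N scalerN.
have sN : forall a, (N a)^T = N a by move=> a; rewrite NE symD // linearN /= sA.
have NPk : forall a k, (Pk M (- A) k).[a] = \det (lead (N a) k) by move=> a k; rewrite PkE NE.
pose a0 := - t^-1.
have pa0 : pdm (N a0).
  have -> : N a0 = t^-1 *: (A + t *: M).
    by rewrite /N /a0 scaleNr opprK scalerDr scalerA mulVf ?gt_eqF // scale1r addrC.
  by apply: pdm_scale; rewrite ?invr_gt0.
pose e0 : 'cV[R]_(1 + n) := col_mx 1%:M 0.
have e0n : e0 != 0.
  rewrite /e0 col_mx_eq0 negb_and; apply/orP; left.
  apply/eqP => /matrixP /(_ ord0 ord0); rewrite !mxE /=; apply/eqP; exact: oner_neq0.
have qe0 : forall a, qf (N a) e0 = ulsubmx (M : 'M_(1 + n)) 0 0 - a * ulsubmx (A : 'M_(1 + n)) 0 0.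
  by move=> a; rewrite /e0 (qf_e0 (N a : 'M_(1 + n))) !mxE.
have al0 : 0 < ulsubmx (A : 'M_(1 + n)) 0 0 by rewrite -(qf_e0 (A : 'M_(1 + n))); apply: pA.
pose a1 := ulsubmx (M : 'M_(1 + n)) 0 0 / ulsubmx (A : 'M_(1 + n)) 0 0.
have na1 : ~ pdm (N a1).
  move=> h; have := h e0 e0n; rewrite qe0 /a1 mulfVK ?gt_eqF // subrr ltxx //.
have a01 : a0 < a1.
  have := pa0 e0 e0n; rewrite qe0 subr_gt0 /a1 ltr_pdivlMr //.

have pos0 : forall k, (k <= n)%N -> 0 < (Pk M (- A) k).[a0].
  move=> k hk; rewrite NPk; exact: sylv1.
have nrQ0 := QP_nroot pos0.
have Q0 : QP M (- A) != 0 by apply: contraNneq nrQ0 => ->; rewrite root0.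
have exr : exists x, a0 < x <= a1 /\ root (QP M (- A)) x.
  have [k [hk pk]] : exists k, (k <= n)%N /\ (Pk M (- A) k).[a1] <= 0.
    apply: NNPP => hn; apply: na1; apply/pdm_minors; first exact: sN.
    move=> k hk; rewrite -NPk ltNge; apply/negP => hle; apply: hn; by exists k.
  have [x hx rx] : exists2 x, a0 <= x <= a1 & root (- Pk M (- A) k) x.
    apply: poly_ivt; first exact: ltW.
    by rewrite !hornerN oppr_le0 oppr_ge0 pk andbT ltW // pos0.
  rewrite rootN in rx; exists x; split; last exact: QP_root rx.
  case/andP: hx => hx1 ->; rewrite andbT lt_def hx1 andbT.
  apply: contraTneq rx => ->; by rewrite /root gt_eqF // pos0.
have [r [ar0 ar1 rr hr]] := first_root Q0 exr.
have pdx : forall x, a0 <= x < r -> pdm (N x).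
  move=> x /andP [x0 xr]; apply/pdm_minors; first exact: sN.
  move=> k hk; rewrite -NPk; apply: (pos_prop (lo := a0)) => //; first exact: pos0.
  move=> z /andP [z0 zx]; have [->|zn] := eqVneq z a0.
    by rewrite /root gt_eqF // pos0.
  apply: contra (hr z _); first exact: QP_root.
  by rewrite lt_def zn z0 /= (le_lt_trans zx xr).
have psdr : forall u, 0 <= qf (N r) u.
  move=> u; rewrite leNgt; apply/negP => q0.
  have u0 : u != 0 by apply: contraTneq q0 => ->; rewrite qf_zero ltxx.
  have al : 0 < qf A u := pA u u0.
  move: q0 al; set q := qf (N r) u; set b := qf A u => q0 al.
  pose d := Order.min (r - a0) (- q / (2%:R * b)).
  have d0 : 0 < d.
    by rewrite lt_min subr_gt0 ar0 /= divr_gt0 // ?oppr_gt0 // mulr_gt0 // ltr0n.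
  have hx : a0 <= r - d < r.
    rewrite ltrBlDr ltrDl d0 andbT lerBrDl -lerBrDr.
    by rewrite ge_min lexx.
  have := pdx _ hx u u0.
  have -> : N (r - d) = N r + d *: A.
    by rewrite /N scalerBl opprB addrA addrAC.
  rewrite qfD qfZ -/q -/b; apply/negP; rewrite -leNgt.
  have hd : d * b <= - q / 2%:R.
    have -> : - q / 2%:R = - q / (2%:R * b) * b.
      by rewrite invfM mulrA mulfVK // gt_eqF.
    apply: ler_wpM2r; first exact: ltW.
    by rewrite /d ge_min lexx orbT.
  apply: (le_trans (lerD (lexx q) hd)).
  rewrite mulNr {1}(splitr q) addrK.
  by rewrite ltW // pmulr_llt0 // invr_gt0 ltr0n.
have sing : \det (N r) == 0.
  apply: contraLR rr => hd; apply: QP_nroot => k hk; rewrite NPk; apply: (sylv1 (sN r)) => //.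
  move=> u u0; rewrite lt_def psdr andbT; apply/negP => /eqP hq.
  have := psd_kernel (sN r) psdr hq => hk0.
  have un : N r \in unitmx by rewrite unitmxE unitfE.
  by move: u0; rewrite -(mulKmx un u) hk0 mulmx0 eqxx.
move/det0P: sing => [w w0 hw].
exists r, w^T; split => //.
  by rewrite trmx_eq0.
by rewrite -[M - r *: A](sN r) -trmx_mul hw trmx0.
Qed.
End Key.

Section LyS.
Variable R : rcfType.
Variable y : nat -> R.

Lemma LyE (p : {poly R}) N : (size p <= N)%N -> Ly y p = \sum_(k < N) p`_k * y k.
Proof.
move=> hN; rewrite /Ly (big_ord_widen N (fun k => p`_k * y k) hN) big_mkcond.
apply: eq_bigr => i _; case: ifP => // /negbT; rewrite -leqNgt => h.
by rewrite nth_default // mul0r.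
Qed.

Lemma LyD p q : Ly y (p + q) = Ly y p + Ly y q.
Proof.
pose N := maxn (size p) (size q).
rewrite !(LyE (N := N)) ?leq_maxl ?leq_maxr ?(leq_trans (size_add _ _)) //.
by rewrite -big_split; apply: eq_bigr => i _; rewrite coefD mulrDl.
Qed.

Lemma Ly0 : Ly y 0 = 0.
Proof. by rewrite /Ly size_poly0 big_ord0. Qed.

Lemma LyZ c p : Ly y (c *: p) = c * Ly y p.
Proof.
rewrite !(LyE (N := size p)) ?size_scale_leq // mulr_sumr.
by apply: eq_bigr => i _; rewrite coefZ mulrA.
Qed.

Lemma LyN p : Ly y (- p) = - Ly y p.
Proof. by rewrite -scaleN1r LyZ mulN1r. Qed.

Lemma Ly_sum I (r : seq I) (P : pred I) (F : I -> {poly R}) :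
  Ly y (\sum_(i <- r | P i) F i) = \sum_(i <- r | P i) Ly y (F i).
Proof. exact: (big_morph _ LyD Ly0). Qed.

Lemma LyXn m : Ly y 'X^m = y m.
Proof.
rewrite (LyE (N := m.+1)) ?size_polyXn // big_ord_recr /= big1 => [|i _].
  by rewrite coefXn eqxx mul1r add0r.
by rewrite coefXn ltn_eqF // mul0r.
Qed.

Lemma poly_expand (p : {poly R}) n : (size p <= n)%N ->
  p = \sum_(i < n) p`_i *: 'X^i.
Proof.
move=> hn; rewrite -poly_def; apply/polyP => i; rewrite coef_poly.
by case: ifP => // /negbT; rewrite -leqNgt => h; rewrite nth_default // (leq_trans hn).
Qed.

Lemma Ly_mulXn th m : Ly y (th * 'X^m) = \sum_(k < size th) th`_k * y (k + m).
Proof.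
rewrite {1}(poly_expand (leqnn (size th))) mulr_suml Ly_sum.
by apply: eq_bigr => k _; rewrite -scalerAl -exprD LyZ LyXn.
Qed.

Lemma Ly_quad d th (q : {poly R}) : (size q <= d.+1)%N ->
  Ly y (th * q ^+ 2) = qf (Hloc d th y) (coefv d q).
Proof.
move=> hq.
have -> : q ^+ 2 = \sum_(j < d.+1) \sum_(i < d.+1) (q`_i * q`_j) *: 'X^(i + j).
  rewrite expr2 [X in X * _](poly_expand hq) [X in _ * X](poly_expand hq) mulr_sumr.
  apply: eq_bigr => j _; rewrite mulr_suml; apply: eq_bigr => i _.
  by rewrite -scalerAl -scalerAr scalerA -exprD.
rewrite mulr_sumr Ly_sum /qf mxE; apply: eq_bigr => j _.
rewrite mulr_sumr Ly_sum mxE mulr_suml; apply: eq_bigr => i _.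
rewrite -scalerAr LyZ Ly_mulXn !mxE.
rewrite [RHS]mulrAC; congr (_ * _).
apply: eq_bigr => k _; by rewrite addnC.
Qed.

Lemma add_pos_lead (a b : {poly R}) : (a != 0 -> 0 < lead_coef a) ->
  (b != 0 -> 0 < lead_coef b) ->
  [/\ (a + b != 0 -> 0 < lead_coef (a + b)), (size a <= size (a + b)%R)%N &
      (size b <= size (a + b)%R)%N].
Proof.
move=> ha hb; case: (ltngtP (size a) (size b)) => hab.
- have bn0 : b != 0 by rewrite -size_poly_gt0 (leq_ltn_trans _ hab).
  rewrite addrC size_polyDl // lead_coefDl //; split => //; [by move=> _; apply: hb|exact: ltnW].
- have an0 : a != 0 by rewrite -size_poly_gt0 (leq_ltn_trans _ hab).
  rewrite size_polyDl // lead_coefDl //; split => //; [by move=> _; apply: ha|exact: ltnW].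
have [a0|an0] := eqVneq a 0.
  move: hab; rewrite a0 size_poly0 => /esym /eqP; rewrite size_poly_eq0 => /eqP ->; rewrite addr0 eqxx; split => //.
have bn0 : b != 0 by rewrite -size_poly_gt0 -hab size_poly_gt0.
have pa := ha an0; have pb := hb bn0.
have hc : (a + b)`_(size a).-1 = lead_coef a + lead_coef b by rewrite coefD /lead_coef hab.
have hs : size (a + b) = size a.
  apply/eqP; rewrite eqn_leq; apply/andP; split.
    by apply: (leq_trans (size_polyD _ _)); rewrite -hab maxnn.
  rewrite leqNgt; apply/negP => hlt.
  have : (a + b)`_(size a).-1 = 0.
    have hle : (size (a + b)%R <= (size a).-1)%N.
      by move: hlt; case: (size a) => // m; rewrite ltnS.
    exact: (elimT (leq_sizeP _ _) hle).
  by rewrite hc => /eqP; rewrite gt_eqF // addr_gt0.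
rewrite hs -hab leqnn; split => // _.
by rewrite /lead_coef hs hc addr_gt0.
Qed.

Lemma sos_lead (ps : seq {poly R}) :
  (\sum_(p <- ps) p ^+ 2 != 0 -> 0 < lead_coef (\sum_(p <- ps) p ^+ 2)) /\
  (forall p, p \in ps -> (size (p ^+ 2)%R <= size (\sum_(p <- ps) p ^+ 2)%R)%N).
Proof.
elim: ps => [|p ps [IH1 IH2]]; first by rewrite big_nil eqxx.
have hp : p ^+ 2 != 0 -> 0 < lead_coef (p ^+ 2).
  move=> h; rewrite lead_coef_exp lt_def sqr_ge0 andbT sqrf_eq0 lead_coef_eq0.
  by apply: contra h => /eqP ->; rewrite expr2 mul0r.
have [h1 h2 h3] := add_pos_lead hp IH1.
rewrite big_cons; split => // q; rewrite inE => /orP [/eqP -> //|hq].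
exact: leq_trans (IH2 q hq) h3.
Qed.

Lemma sos_size d (s : {poly R}) (ps : seq {poly R}) :
  (size s <= (2 * d).+1)%N -> s = \sum_(p <- ps) p ^+ 2 ->
  forall p, p \in ps -> (size p <= d.+1)%N.
Proof.
move=> hs es p hp; have [_ h2] := sos_lead ps.
rewrite es in hs; have := leq_trans (h2 p hp) hs.
have [->|pn0] := eqVneq p 0; first by rewrite size_poly0.
rewrite expr2 size_mul //.
case: (size p) => // m; rewrite addSn /= addnS ltnS.
rewrite mul2n -addnn => h.
by rewrite ltnS -(leq_pmul2l (isT : (0 < 2)%N)) !mul2n -!addnn.
Qed.
End LyS.

Section Fin.
Variable R : rcfType.
Variable y : nat -> R.

Lemma Hloc_sym d th : (Hloc d th y)^T = Hloc d th y.
Proof. by apply/matrixP => i j; rewrite !mxE; apply: eq_bigr => k _; rewrite (addnC j). Qed.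

Lemma Hmx_sym d : (Hmx d y)^T = Hmx d y.
Proof. by apply/matrixP => i j; rewrite !mxE addnC. Qed.

Lemma Hloc1 d : Hloc d 1 y = Hmx d y.
Proof. by apply/matrixP => i j; rewrite !mxE size_poly1 big_ord1 coef1 eqxx mul1r addn0. Qed.

Lemma Hloc_theta d a : Hloc d (theta a) y = Hloc d 'X y - a *: Hmx d y.
Proof.
apply/matrixP => i j; rewrite !mxE /theta size_XsubC size_polyX !big_ord_recr !big_ord0 /=.
rewrite !coefB !coefX !coefC /= !add0r subr0 mul0r add0r mul1r mulNr addn0.
by rewrite addrC.
Qed.

Lemma Hloc_ntheta d b : Hloc d (- theta b) y = - Hloc d 'X y - (- b) *: Hmx d y.
Proof.
by rewrite scaleNr -opprD -Hloc_theta; apply/matrixP => i j; rewrite !mxE size_polyN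
  -sumrN; apply: eq_bigr => k _; rewrite coefN mulNr.
Qed.

Lemma Ly_theta a s : Ly y (theta a * s) = Ly y ('X * s) - a * Ly y s.
Proof. by rewrite /theta mulrBl LyD LyN mul_polyC LyZ. Qed.

Lemma Ly_sos d th (ps : seq {poly R}) : (forall p, p \in ps -> (size p <= d.+1)%N) ->
  Ly y (th * \sum_(p <- ps) p ^+ 2) = \sum_(p <- ps) qf (Hloc d th y) (coefv d p).
Proof.
move=> hs; rewrite mulr_sumr Ly_sum !big_seq; apply: eq_bigr => p hp.
exact: Ly_quad (hs p hp).
Qed.

Lemma max_prop n (M A : 'M[R]_n) l a (v : 'cV[R]_n) : pdm A -> v != 0 -> (M - l *: A) *m v = 0 ->
  psd (M - a *: A) -> a <= l.
Proof.
move=> pA v0 hv ps.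
have : 0 <= qf (M - a *: A) v := ps v.
have -> : M - a *: A = (M - l *: A) + (l - a) *: A.
  by rewrite scalerBl addrA subrK.
rewrite qfD qfZ {1}/qf -mulmxA hv mulmx0 mxE add0r pmulr_lge0 ?subr_ge0 //.
exact: pA.
Qed.

Definition pv d (v : 'cV[R]_d.+1) : {poly R} := \poly_(i < d.+1) v (inord i) 0.

Lemma coefv_pv d v : coefv d (pv v) = v.
Proof. by apply/matrixP => i j; rewrite mxE coef_poly ltn_ord (ord1 j) inord_val. Qed.

Lemma size_pv d v : (size (pv (d := d) v) <= d.+1)%N.
Proof. exact: size_poly. Qed.

Lemma normalize n (A : 'M[R]_n) v : pdm A -> v != 0 ->
  exists c, 0 < c /\ qf A (c *: v) = 1.
Proof.
move=> pA v0; have h := pA v v0.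
exists (Num.sqrt (qf A v)^-1); split; first by rewrite sqrtr_gt0 invr_gt0.
by rewrite qf_scalev sqr_sqrtr ?invr_ge0 ?ltW // mulVf // gt_eqF.
Qed.
End Fin.

Unset Implicit Arguments.

Theorem theorem3p5 (R : rcfType) (y : nat -> R)
  (Hpd : forall d : nat, pd (Hmx d y)) (d : nat) :
  exists (ad bd : R) (sig psi : {poly R}),
    (* a_d = max { a : H_d(theta_a y) >= 0 } *)
    (psd (Hloc d (theta ad) y) /\
       forall a : R, psd (Hloc d (theta a) y) -> a <= ad) /\
    (* b_d = min { b : H_d(-theta_b y) >= 0 } *)
    (psd (Hloc d (- theta bd) y) /\
       forall b : R, psd (Hloc d (- theta b) y) -> bd <= b) /\
    (* a_d = a_d^* , infimum attained at sig *)
    (sos_d d sig /\ Ly y sig = 1 /\ Ly y ('X * sig) = ad /\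
       forall s : {poly R}, sos_d d s -> Ly y s = 1 -> ad <= Ly y ('X * s)) /\
    (* b_d = b_d^* , supremum attained at psi *)
    (sos_d d psi /\ Ly y psi = 1 /\ Ly y ('X * psi) = bd /\
       forall s : {poly R}, sos_d d s -> Ly y s = 1 -> Ly y ('X * s) <= bd) /\
    (* complementarity *)
    Ly y (('X - ad%:P) * sig) = 0 /\ Ly y ((bd%:P - 'X) * psi) = 0 /\
    (* kernel property (stated for sig and, more generally, for every minimizer) *)
    (forall (s : {poly R}) (ps : seq {poly R}),
       sos_d d s -> Ly y s = 1 -> Ly y ('X * s) = ad ->
       s = \sum_(p <- ps) p ^+ 2 ->
       (forall p, p \in ps -> (size p <= d.+1)%N) ->
       forall p, p \in ps -> Hloc d (theta ad) y *m coefv d p = 0).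
Proof.
pose H := Hmx d y; pose X1 := Hloc d 'X y.
have sH : H^T = H := Hmx_sym y d.
have sX : X1^T = X1 := Hloc_sym y d 'X.
have pH : pdm H := Hpd d.
have [l1 [v1 [v10 ps1 hv1]]] := key sX sH pH.
have sX' : (- X1)^T = - X1 by rewrite linearN /= sX.
have [l2 [v2 [v20 ps2 hv2]]] := key sX' sH pH.
have [c1 [c10 hc1]] := normalize pH v10.
have [c2 [c20 hc2]] := normalize pH v20.
pose q1 := pv (c1 *: v1); pose q2 := pv (c2 *: v2).
have Ht : forall a, Hloc d (theta a) y = X1 - a *: H by move=> a; exact: Hloc_theta.
have Hnt : forall b, Hloc d (- theta b) y = - X1 - (- b) *: H by move=> b; exact: Hloc_ntheta.
have sos_sig : forall q : {poly R}, (size q <= d.+1)%N -> sos_d d (q ^+ 2).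
  move=> q hq; split; last by exists [:: q]; rewrite big_seq1.
  apply: (leq_trans (size_polyMleq _ _)).
  move: hq; case: (size q) => //= m hm; rewrite addnS mul2n -addnn ltnS.
  by rewrite leq_add.
have Lyq1 : forall q : {poly R}, (size q <= d.+1)%N -> Ly y (q ^+ 2) = qf H (coefv d q).
  by move=> q hq; rewrite -[q ^+ 2]mul1r (Ly_quad y _ hq) Hloc1.
have sq1 := size_pv (c1 *: v1); have sq2 := size_pv (c2 *: v2).
have Ly1 : Ly y (q1 ^+ 2) = 1 by rewrite Lyq1 // coefv_pv.
have Ly2 : Ly y (q2 ^+ 2) = 1 by rewrite Lyq1 // coefv_pv.
have th1 : Ly y (theta l1 * q1 ^+ 2) = 0.
  rewrite (Ly_quad y _ sq1) coefv_pv Ht /qf -mulmxA -scalemxAr hv1 scaler0 mulmx0.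
  by rewrite mxE.
have th2 : Ly y (- theta (- l2) * q2 ^+ 2) = 0.
  rewrite (Ly_quad y _ sq2) coefv_pv Hnt opprK /qf -mulmxA -scalemxAr hv2 scaler0 mulmx0.
  by rewrite mxE.
have LyX1 : Ly y ('X * q1 ^+ 2) = l1.
  by move: th1; rewrite Ly_theta Ly1 mulr1 => /eqP; rewrite subr_eq0 => /eqP.
have LyX2 : Ly y ('X * q2 ^+ 2) = - l2.
  by move: th2; rewrite mulNr LyN Ly_theta Ly2 mulr1 => /eqP; rewrite oppr_eq0 subr_eq0 => /eqP.
have sos_nn : forall th s, psd (Hloc d th y) -> sos_d d s -> 0 <= Ly y (th * s).
  move=> th s pth [hs [ps es]]; rewrite es (Ly_sos y th (sos_size hs es)).
  by apply: sumr_ge0 => p _; exact: pth.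
exists l1, (- l2), (q1 ^+ 2), (q2 ^+ 2).
split.
  split; first by rewrite Ht.
  by move=> a; rewrite Ht; exact: max_prop pH v10 hv1.
split.
  split; first by rewrite Hnt opprK.
  move=> b; rewrite Hnt => hb; rewrite lerNl.
  exact: max_prop pH v20 hv2 hb.
split.
  split; first exact: sos_sig.
  split; first exact: Ly1.
  split; first exact: LyX1.
  move=> s hs Ls; have := sos_nn (theta l1) s _ hs; rewrite Ly_theta Ls mulr1 subr_ge0.
  by apply; rewrite Ht.
split.
  split; first exact: sos_sig.
  split; first exact: Ly2.
  split; first exact: LyX2.
  move=> s hs Ls; have := sos_nn (- theta (- l2)) s _ hs.
  rewrite mulNr LyN Ly_theta Ls mulr1 oppr_ge0 subr_le0.
  by apply; rewrite Hnt opprK.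
split; first exact: th1.
split.
  by rewrite -opprB -/(theta _) th2.
move=> s ps hs Ls LXs es hps p hp.
have B0 : psd (Hloc d (theta l1) y) by rewrite Ht.
have := Ly_sos y (theta l1) hps; rewrite -es Ly_theta Ls LXs mulr1 subrr => /esym /eqP.
rewrite psumr_eq0 => [/allP /(_ p hp) /= /eqP hq|q _]; last exact: B0.
by apply: psd_kernel => //; exact: Hloc_sym.
Qed.
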